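(* There is an absolute constant $c$ such that the following holds. Let $2\pi>\theta_1>\theta_2>\dots>\theta_m>0$ and $s_\ell=\sum_{j=1}^\ell\theta_j$. Then $$\max_{1\le\ell\le m}\Big|\sum_{j=1}^\ell e^{is_j}\Big|\le c\big(\theta_m^{-1}+(2\pi-\theta_1)^{-1}\big).$$ *)

(* Defs.v *)
From Stdlib Require Import Reals.
Open Scope R_scope.

Fixpoint psum (f : nat -> R) (l : nat) : R :=
  match l with
  | O => 0
  | S k => psum f k + f (S k)
  end.

Definition svals (theta : nat -> R) (l : nat) : R := psum theta l.

Definition cmod (x y : R) : R := sqrt (x ^ 2 + y ^ 2).

(* | sum_{j=1}^l e^{i s_j} |, with e^{i t} = cos t + i sin t *)
Definition expsum_mod (theta : nat -> R) (l : nat) : R :=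
  cmod (psum (fun j => cos (svals theta j)) l)
       (psum (fun j => sin (svals theta j)) l).

(* Main.v *)
Require Import Defs.
From Stdlib Require Import Reals Lra Lia Psatz.
Open Scope R_scope.

Lemma sin_lower a : 0 <= a -> a <= PI/2 -> a/3 <= sin a.
Proof.
  intros H0 H1. assert (HP := PI_4). assert (HP2 := PI2_Rlt_PI).
  destruct (SIN a H0 ltac:(lra)) as [Hl _].
  eapply Rle_trans; [|exact Hl].
  unfold sin_lb, sin_approx. cbv beta iota delta [sum_f_R0]. unfold sin_term.
  replace (INR (Factorial.fact (2*3+1))) with 5040 by (rewrite INR_IZR_INZ; reflexivity).
  replace (INR (Factorial.fact (2*2+1))) with 120 by (rewrite INR_IZR_INZ; reflexivity).
  replace (INR (Factorial.fact (2*1+1))) with 6 by (rewrite INR_IZR_INZ; reflexivity).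
  replace (INR (Factorial.fact (2*0+1))) with 1 by (rewrite INR_IZR_INZ; reflexivity).
  assert (a <= 2) by lra.
  assert (a*a <= 4) by nra.
  assert (0 <= a*a) by nra.
  assert (0 <= a*a*a*a) by nra.
  simpl pow. 
  assert (0 <= a*a*a*a*(1/120 - a*a/5040)) by (apply Rmult_le_pos; lra).
  assert (0 <= a*(2/3 - a*a/6)) by (apply Rmult_le_pos; lra).
  nra.
Qed.

Lemma inv_sin h : 0 < h -> h < PI -> / sin h <= 3/h + 3/(PI-h).
Proof.
  intros H0 H1.
  assert (Hs : 0 < sin h) by (apply sin_gt_0; lra).
  assert (A1 : 0 < 3/h) by (apply Rdiv_lt_0_compat; lra).
  assert (A2 : 0 < 3/(PI-h)) by (apply Rdiv_lt_0_compat; lra).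
  destruct (Rle_lt_dec h (PI/2)).
  - assert (h/3 <= sin h) by (apply sin_lower; lra).
    assert (/ sin h <= 3/h).
    { unfold Rdiv. rewrite <- (Rinv_inv 3). rewrite <- Rinv_mult.
      apply Rinv_le_contravar; lra. }
    lra.
  - rewrite <- sin_PI_x.
    assert ((PI-h)/3 <= sin (PI-h)) by (apply sin_lower; lra).
    rewrite <- sin_PI_x in Hs.
    assert (/ sin (PI-h) <= 3/(PI-h)).
    { unfold Rdiv. rewrite <- (Rinv_inv 3). rewrite <- Rinv_mult.
      apply Rinv_le_contravar; lra. }
    lra.
Qed.

Lemma cmod_nonneg a b : 0 <= cmod a b.
Proof. unfold cmod. apply sqrt_pos. Qed.

Lemma cmod_tri a b c d : cmod (a+c) (b+d) <= cmod a b + cmod c d.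
Proof.
  unfold cmod.
  assert (P1 : 0 <= a^2+b^2) by (apply Rplus_le_le_0_compat; apply pow2_ge_0). assert (P2 : 0 <= c^2+d^2) by (apply Rplus_le_le_0_compat; apply pow2_ge_0).
  assert (S1 := sqrt_pos (a^2+b^2)). assert (S2 := sqrt_pos (c^2+d^2)).
  apply Rsqr_incr_0_var; [|lra].
  unfold Rsqr. rewrite sqrt_sqrt by (apply Rplus_le_le_0_compat; apply pow2_ge_0).
  assert (E1 := sqrt_sqrt _ P1). assert (E2 := sqrt_sqrt _ P2).
  assert (a*c+b*d <= sqrt (a^2+b^2) * sqrt (c^2+d^2)).
  { rewrite <- sqrt_mult by lra.
    destruct (Rle_lt_dec (a*c+b*d) 0). { assert (H := sqrt_pos ((a^2+b^2)*(c^2+d^2))). lra. }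
    rewrite <- (sqrt_pow2 (a*c+b*d)) by lra. apply sqrt_le_1_alt.
    assert (Hq := pow2_ge_0 (a*d-b*c)). nra. }
  set (u := sqrt (a^2+b^2)) in *. set (v := sqrt (c^2+d^2)) in *.
  replace ((u+v)*(u+v)) with (u*u + v*v + 2*(u*v)) by ring.
  rewrite E1, E2. nra.
Qed.

Lemma cmod_abs a b : cmod a b <= Rabs a + Rabs b.
Proof.
  unfold cmod. rewrite <- (sqrt_pow2 (Rabs a + Rabs b)).
  2: { assert (H1:=Rabs_pos a); assert (H2:=Rabs_pos b); lra. }
  apply sqrt_le_1_alt.
  rewrite <- (pow2_abs a), <- (pow2_abs b).
  assert (H1:=Rabs_pos a); assert (H2:=Rabs_pos b). nra.
Qed.

Lemma cmod_rot x t : 0 <= x -> cmod (- (x * sin t)) (x * cos t) <= x.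
Proof.
  intros Hx. unfold cmod. apply Rle_trans with (sqrt (x^2)); [| rewrite sqrt_pow2; lra].
  apply sqrt_le_1_alt.
  assert (H := sin2_cos2 t). unfold Rsqr in H. replace ((- (x * sin t)) ^ 2 + (x * cos t) ^ 2) with (x^2 * (sin t * sin t + cos t * cos t)) by ring. rewrite H; lra.
Qed.
Definition kk (t : R) : R := cos (t/2) / sin (t/2).

Lemma key_id0 sg h : sin h <> 0 ->
  cos (sg+2*h) - (cos (sg+2*h) + kk (2*h) * sin (sg+2*h))/2 = -(cos sg + kk (2*h) * sin sg)/2 /\
  sin (sg+2*h) - (sin (sg+2*h) - kk (2*h) * cos (sg+2*h))/2 = -(sin sg - kk (2*h) * cos sg)/2.
Proof.
  intros Hs. unfold kk.
  replace (2*h/2) with h by field.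
  rewrite cos_plus, sin_plus, sin_2a, cos_2a.
  assert (E := sin2_cos2 h). unfold Rsqr in E.
  split; field_simplify; auto; f_equal;
  match goal with |- _ = ?B => rewrite <- (Rmult_1_l B) end; rewrite <- E; ring.
Qed.

Lemma key_id sg th : sin (th/2) <> 0 ->
  cos (sg+th) - (cos (sg+th) + kk th * sin (sg+th))/2 = -(cos sg + kk th * sin sg)/2 /\
  sin (sg+th) - (sin (sg+th) - kk th * cos (sg+th))/2 = -(sin sg - kk th * cos sg)/2.
Proof.
  intros H. replace th with (2*(th/2)) by field. apply key_id0. exact H.
Qed.

Lemma abs2 x : - Rabs x <= x <= Rabs x.
Proof. split; [|apply Rle_abs]. assert (H := Rle_abs (-x)). rewrite Rabs_Ropp in H. lra. Qed.

Lemma mul_abs k s : -1 <= s <= 1 -> - Rabs k <= k * s <= Rabs k.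
Proof.
  intros Hs. assert (Rabs (k*s) <= Rabs k).
  { rewrite Rabs_mult. assert (Rabs s <= 1) by (apply Rabs_le; lra).
    assert (H0 := Rabs_pos k). nra. }
  assert (H1 := abs2 (k*s)). lra.
Qed.

Lemma kk_facts t : 0 < t < 2*PI ->
  0 < sin (t/2) /\ Rabs (kk t) <= / sin (t/2) /\ 1 <= / sin (t/2).
Proof.
  intros Ht. assert (Hs : 0 < sin (t/2)) by (apply sin_gt_0; lra).
  split; [exact Hs|]. split.
  - unfold kk. set (h := t/2) in *. unfold Rdiv. rewrite Rabs_mult, (Rabs_right (/ sin h)).
    2: { left; apply Rinv_0_lt_compat; exact Hs. }
    assert (Rabs (cos h) <= 1) by (apply Rabs_le; apply COS_bound).
    assert (0 < / sin h) by (apply Rinv_0_lt_compat; exact Hs).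
    nra.
  - rewrite <- Rinv_1 at 1. apply Rinv_le_contravar; [exact Hs|]. apply SIN_bound.
Qed.

Lemma kk_mono a b : 0 < a -> a < b -> b < 2*PI -> kk b <= kk a.
Proof.
  intros H1 H2 H3. unfold kk.
  assert (Sa : 0 < sin (a/2)) by (apply sin_gt_0; lra).
  assert (Sb : 0 < sin (b/2)) by (apply sin_gt_0; lra).
  assert (D : 0 <= sin (b/2 - a/2)) by (apply sin_ge_0; lra).
  rewrite sin_minus in D.
  apply Rmult_le_reg_r with (sin (a/2) * sin (b/2)); [nra|].
  field_simplify; try lra.
Qed.

Definition RX (th : nat -> R) (l : nat) : R :=
  psum (fun j => cos (svals th j)) l - (cos (svals th l) + kk (th l) * sin (svals th l))/2 + 1/2.
Definition RY (th : nat -> R) (l : nat) : R :=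
  psum (fun j => sin (svals th j)) l - (sin (svals th l) - kk (th l) * cos (svals th l))/2 - kk (th 1%nat)/2.

Lemma svals_S th n : svals th (S n) = svals th n + th (S n).
Proof. reflexivity. Qed.

Lemma R_base th : sin (th 1%nat / 2) <> 0 -> RX th 1 = 0 /\ RY th 1 = 0.
Proof.
  intros H. unfold RX, RY. simpl psum. rewrite svals_S.
  replace (svals th 0) with 0 by reflexivity.
  destruct (key_id 0 (th 1%nat) H) as [E1 E2].
  rewrite cos_0, sin_0 in *. split; lra.
Qed.

Lemma R_step th n : sin (th (S n) / 2) <> 0 ->
  RX th (S n) = RX th n + - ((kk (th (S n)) - kk (th n))/2 * sin (svals th n)) /\
  RY th (S n) = RY th n + (kk (th (S n)) - kk (th n))/2 * cos (svals th n).
Proof.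
  intros H. unfold RX, RY. cbn [psum]. rewrite svals_S.
  destruct (key_id (svals th n) (th (S n)) H) as [E1 E2].
  split; lra.
Qed.

Theorem mainTheorem15 :
  exists c : R,
    forall (m : nat) (theta : nat -> R),
      (1 <= m)%nat ->
      theta 1%nat < 2 * PI ->
      (forall j : nat, (1 <= j)%nat -> (j < m)%nat -> theta (S j) < theta j) ->
      0 < theta m ->
      forall l : nat, (1 <= l)%nat -> (l <= m)%nat ->
        expsum_mod theta l <= c * (/ theta m + / (2 * PI - theta 1%nat)).
Proof.
  exists 60. intros m th Hm H1 Hdec Hm0 l Hl1 Hlm.
  assert (Hup : forall j, (1 <= j <= m)%nat -> th j <= th 1%nat).
  { induction j as [|n IH]; intros Hj; [lia|].
    destruct n as [|n']; [lra|].
    assert (th (S (S n')) < th (S n')) by (apply Hdec; lia).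
    assert (th (S n') <= th 1%nat) by (apply IH; lia). lra. }
  assert (Hlow : forall d j, (1 <= j)%nat -> (j + d = m)%nat -> th m <= th j).
  { induction d as [|d IH]; intros j Hj Hjd.
    - replace j with m by lia. lra.
    - assert (th m <= th (S j)) by (apply IH; lia).
      assert (th (S j) < th j) by (apply Hdec; lia). lra. }
  assert (Hrange : forall j, (1 <= j <= m)%nat -> 0 < th j < 2*PI /\ th m <= th j <= th 1%nat).
  { intros j Hj. assert (th j <= th 1%nat) by (apply Hup; lia).
    assert (th m <= th j) by (apply (Hlow (m - j)%nat); lia). lra. }
  assert (Hsin : forall j, (1 <= j <= m)%nat -> sin (th j / 2) <> 0).
  { intros j Hj. destruct (kk_facts (th j)) as [Hs _]; [apply Hrange; lia|lra]. }
  assert (Claim : forall n, (1 <= n <= m)%nat -> cmod (RX th n) (RY th n) <= (kk (th n) - kk (th 1%nat))/2).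
  { induction n as [|n IH]; intros Hn; [lia|].
    destruct n as [|n'].
    - destruct (R_base th) as [E1 E2]; [apply Hsin; lia|].
      rewrite E1, E2. unfold cmod. replace (0^2+0^2) with 0 by ring. rewrite sqrt_0. lra.
    - destruct (R_step th (S n')) as [E1 E2]; [apply Hsin; lia|].
      rewrite E1, E2.
      assert (IH' := IH ltac:(lia)).
      assert (Hk : kk (th (S n')) <= kk (th (S (S n')))).
      { apply kk_mono.
        - apply Hrange; lia.
        - apply Hdec; lia.
        - apply Hrange; lia. }
      eapply Rle_trans; [apply cmod_tri|].
      assert (cmod (- ((kk (th (S (S n'))) - kk (th (S n'))) / 2 * sin (svals th (S n'))))
                ((kk (th (S (S n'))) - kk (th (S n'))) / 2 * cos (svals th (S n'))) <=
              (kk (th (S (S n'))) - kk (th (S n'))) / 2) by (apply cmod_rot; lra).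
      lra. }
  assert (Cl := Claim l ltac:(lia)).
  destruct (Hrange l ltac:(lia)) as [[Rl1 Rl2] [Rl3 Rl4]].
  destruct (Hrange 1%nat ltac:(lia)) as [[R11 R12] [R13 R14]].
  destruct (kk_facts (th l) ltac:(lra)) as [Sl [Kl Il]].
  destruct (kk_facts (th 1%nat) ltac:(lra)) as [S1 [K1 I1]].
  set (kl := kk (th l)) in *. set (k1 := kk (th 1%nat)) in *.
  set (sl := svals th l) in *.
  unfold expsum_mod.
  replace (psum (fun j => cos (svals th j)) l) with
    (RX th l + ((cos sl + kl * sin sl)/2 - 1/2)) by (unfold RX; fold sl kl; ring).
  replace (psum (fun j => sin (svals th j)) l) with
    (RY th l + ((sin sl - kl * cos sl)/2 + k1/2)) by (unfold RY; fold sl kl k1; ring).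
  eapply Rle_trans; [apply cmod_tri|].
  eapply Rle_trans; [apply Rplus_le_compat_l; apply cmod_abs|].
  assert (C1 := COS_bound sl). assert (S1' := SIN_bound sl).
  assert (M1 := mul_abs kl (sin sl) S1'). assert (M2 := mul_abs kl (cos sl) C1).
  assert (A1 : Rabs ((cos sl + kl * sin sl)/2 - 1/2) <= 1 + Rabs kl) by (apply Rabs_le; lra).
  assert (A2 : Rabs ((sin sl - kl * cos sl)/2 + k1/2) <= 1 + Rabs kl + Rabs k1).
  { assert (H := abs2 k1). apply Rabs_le; lra. }
  assert (B1 := abs2 kl). assert (B2 := abs2 k1).
  assert (Hinv : forall t, th m <= t -> t <= th 1%nat ->
      / sin (t/2) <= 6 * (/ th m + / (2*PI - th 1%nat))).
  { intros t Ht1 Ht2.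
    assert (Hi := inv_sin (t/2) ltac:(lra) ltac:(lra)).
    replace (3 / (t/2)) with (6 * / t) in Hi by (field; lra).
    replace (3 / (PI - t/2)) with (6 * / (2*PI - t)) in Hi by (field; lra).
    assert (/ t <= / th m) by (apply Rinv_le_contravar; lra).
    assert (/ (2*PI - t) <= / (2*PI - th 1%nat)) by (apply Rinv_le_contravar; lra).
    lra. }
  assert (Hil := Hinv (th l) ltac:(lra) ltac:(lra)).
  assert (Hi1 := Hinv (th 1%nat) ltac:(lra) ltac:(lra)).
  lra.
Qed.
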